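(* Let $(a,b,c,\lambda)\in(\mathbb F^\times)^4$. For any $\triangle_q$-module $V$ and $v\in V$ the following are equivalent: (i) there exists a $\triangle_q$-module homomorphism $M_\lambda(a,b,c)\to V$ sending $m_0$ to $v$; (ii) $Bv=\theta_0^*v$, $(B-\theta_1^* )Av=(\theta_0(\theta_0^*-\theta_1^* )+\varphi_1)v$, $\beta v=\omega^*v$ and $\gamma v=\omega^\varepsilon v$, where $\omega^*=(c+c^{-1})(a+a^{-1})+(b+b^{-1})(\lambda q+\lambda^{-1}q^{-1})$ and $\omega^\varepsilon=(a+a^{-1})(b+b^{-1})+(c+c^{-1})(\lambda q+\lambda^{-1}q^{-1})$.
   Context: $\mathbb F$ is an algebraically closed field and $q\in\mathbb F^\times$ is a root of unity of order $d\notin\{1,2,4\}$. $\triangle_q$ is the unital associative $\mathbb F$-algebra with generators $A,B,C$ subject to: each of $A+\frac{qBC-q^{-1}CB}{q^2-q^{-2}}$, $B+\frac{qCA-q^{-1}AC}{q^2-q^{-2}}$, $C+\frac{qAB-q^{-1}BA}{q^2-q^{-2}}$ is central; $\alpha,\beta,\gamma$ denote these three central elements multiplied by $q+q^{-1}$. For $(a,b,c,\lambda)\in(\mathbb F^\times)^4$ and $i\in\mathbb N$: $\theta_i=a\lambda^{-1}q^{2i}+a^{-1}\lambda q^{-2i}$, $\theta_i^*=b\lambda^{-1}q^{2i}+b^{-1}\lambda q^{-2i}$, $\varphi_i=a^{-1}b^{-1}\lambda q(q^i-q^{-i})(\lambda^{-1}q^{i-1}-\lambda q^{1-i})(q^{-i}-abc\lambda^{-1}q^{i-1})(q^{-i}-abc^{-1}\lambda^{-1}q^{i-1})$.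 The Verma module $M_\lambda(a,b,c)$ is the $\triangle_q$-module with basis $\{m_i\}_{i\in\mathbb N}$ such that $(A-\theta_i)m_i=m_{i+1}$, $(B-\theta_i^* )m_i=\varphi_im_{i-1}$ for all $i$ ($m_{-1}$ arbitrary), and $\alpha,\beta,\gamma$ act as the scalars $(b+b^{-1})(c+c^{-1})+(a+a^{-1})(\lambda q+\lambda^{-1}q^{-1})$, $(c+c^{-1})(a+a^{-1})+(b+b^{-1})(\lambda q+\lambda^{-1}q^{-1})$, $(a+a^{-1})(b+b^{-1})+(c+c^{-1})(\lambda q+\lambda^{-1}q^{-1})$ respectively. *)

(* Defs.v *)
From HB Require Import structures.
From mathcomp Require Import all_boot all_order all_algebra.
Set Implicit Arguments. Unset Strict Implicit. Unset Printing Implicit Defensive.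
Import Order.TTheory GRing.Theory Num.Theory.
Local Open Scope ring_scope.

(* The algebra triangle_q is presented by generators A,B,C and relations
   "each of the three elements below is central".  A module over it is thus
   exactly an F-vector space V with three linear operators A,B,C such that
   the three operators below commute with A, B and C. *)
Section TriQ.
Variables (F : fieldType) (q : F) (V : lmodType F) (A B C : V -> V).

Definition triq_cA (x : V) : V :=
  A x + (q ^+ 2 - q ^- 2)^-1 *: (q *: B (C x) - q^-1 *: C (B x)).
Definition triq_cB (x : V) : V :=
  B x + (q ^+ 2 - q ^- 2)^-1 *: (q *: C (A x) - q^-1 *: A (C x)).
Definition triq_cC (x : V) : V :=
  C x + (q ^+ 2 - q ^- 2)^-1 *: (q *: A (B x) - q^-1 *: B (A x)).

Definition triq_alpha (x : V) : V := (q + q^-1) *: triq_cA x.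
Definition triq_beta  (x : V) : V := (q + q^-1) *: triq_cB x.
Definition triq_gamma (x : V) : V := (q + q^-1) *: triq_cC x.

Definition commutes (f g : V -> V) := forall x, f (g x) = g (f x).

Definition is_triq_module : Prop :=
  (commutes triq_cA A /\ commutes triq_cA B /\ commutes triq_cA C) /\
  (commutes triq_cB A /\ commutes triq_cB B /\ commutes triq_cB C) /\
  (commutes triq_cC A /\ commutes triq_cC B /\ commutes triq_cC C).
End TriQ.

Definition is_basis (F : fieldType) (M : lmodType F) (m : nat -> M) : Prop :=
  (forall x : M, exists (n : nat) (c : nat -> F), x = \sum_(i < n) c i *: m i)
  /\ (forall (n : nat) (c : nat -> F),
        \sum_(i < n) c i *: m i = 0 -> forall i : nat, (i < n)%N -> c i = 0).

Section Params.
Variables (F : fieldType) (q a b c lam : F).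

Definition theta (i : nat) : F :=
  a * lam^-1 * q ^ (2 * i%:Z) + a^-1 * lam * q ^ (- (2 * i%:Z)).
Definition thetas (i : nat) : F :=
  b * lam^-1 * q ^ (2 * i%:Z) + b^-1 * lam * q ^ (- (2 * i%:Z)).
Definition varphi (i : nat) : F :=
  a^-1 * b^-1 * lam * q * (q ^ i%:Z - q ^ (- i%:Z))
  * (lam^-1 * q ^ (i%:Z - 1) - lam * q ^ (1 - i%:Z))
  * (q ^ (- i%:Z) - a * b * c * lam^-1 * q ^ (i%:Z - 1))
  * (q ^ (- i%:Z) - a * b * c^-1 * lam^-1 * q ^ (i%:Z - 1)).

Definition omega_alpha : F :=
  (b + b^-1) * (c + c^-1) + (a + a^-1) * (lam * q + lam^-1 * q^-1).
Definition omega_beta : F :=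
  (c + c^-1) * (a + a^-1) + (b + b^-1) * (lam * q + lam^-1 * q^-1).
Definition omega_gamma : F :=
  (a + a^-1) * (b + b^-1) + (c + c^-1) * (lam * q + lam^-1 * q^-1).
End Params.

Definition is_verma (F : fieldType) (q a b c lam : F) (M : lmodType F)
  (A B C : M -> M) (m : nat -> M) : Prop :=
  is_triq_module q A B C /\ is_basis m /\
  (forall i, A (m i) - theta q a lam i *: m i = m i.+1) /\
  (* m_{-1} is arbitrary since varphi 0 = 0; we take m_{0.-1} = m_0 *)
  (forall i, B (m i) - thetas q b lam i *: m i = varphi q a b c lam i *: m i.-1) /\
  (forall x, triq_alpha q A B C x = omega_alpha q a b c lam *: x) /\
  (forall x, triq_beta q A B C x = omega_beta q a b c lam *: x) /\
  (forall x, triq_gamma q A B C x = omega_gamma q a b c lam *: x).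

(* Main.v *)
Require Import Defs.
From HB Require Import structures.
From mathcomp Require Import all_boot all_order all_algebra.
From mathcomp Require Import ring.
From Stdlib Require Import ClassicalEpsilon.
Set Implicit Arguments. Unset Strict Implicit. Unset Printing Implicit Defensive.
Import Order.TTheory GRing.Theory Num.Theory.
Local Open Scope ring_scope.

Lemma sum_widen (F : fieldType) (W : lmodType F) (u : nat -> W) n N (c : nat -> F) :
  (n <= N)%N -> \sum_(i < n) c i *: u i
     = \sum_(i < N) (if (i < n)%N then c i else 0) *: u i.
Proof.
move=> le; rewrite (big_ord_widen N (fun i => c i *: u i) le) big_mkcond /=.
by apply eq_bigr => i _; case: ifP => _; rewrite ?scale0r.
Qed.

Section Ext.
Variables (F : fieldType) (M V : lmodType F) (m : nat -> M) (w : nat -> V).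
Hypothesis Hb : is_basis m.

Lemma rep_uniq n n' (c c' : nat -> F) :
  \sum_(i<n) c i *: m i = \sum_(i<n') c' i *: m i ->
  \sum_(i<n) c i *: w i = \sum_(i<n') c' i *: w i.
Proof.
move=> E.
rewrite (sum_widen w c (leq_maxl n n')) (sum_widen w c' (leq_maxr n n')).
rewrite (sum_widen m c (leq_maxl n n')) (sum_widen m c' (leq_maxr n n')) in E.
move/eqP: E; rewrite -subr_eq0 -sumrB => /eqP E.
have H0 := Hb.2 (maxn n n') (fun i => (if (i<n)%N then c i else 0)
   - (if (i<n')%N then c' i else 0)).
apply/eqP; rewrite -subr_eq0 -sumrB; apply/eqP; apply big1 => i _.
rewrite -scalerBl H0 ?scale0r //.
by apply: (etrans _ E); apply eq_bigr => j _; rewrite scalerBl.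
Qed.

Definition ext (x : M) : V :=
  let e := constructive_indefinite_description _ (Hb.1 x) in
  let e2 := constructive_indefinite_description _ (projT2 e) in
  \sum_(i < projT1 e) projT1 e2 i *: w i.

Lemma extE n (c : nat -> F) : ext (\sum_(i<n) c i *: m i) = \sum_(i<n) c i *: w i.
Proof.
rewrite /ext /=.
case: constructive_indefinite_description => n0 /= H.
case: constructive_indefinite_description => c0 /= E.
by apply: rep_uniq; rewrite -E.
Qed.

Lemma ext_lin : linear ext.
Proof.
move=> a x y.
have [n [c ->]] := Hb.1 x; have [n' [c' ->]] := Hb.1 y.
rewrite (sum_widen m c (leq_maxl n n')) (sum_widen m c' (leq_maxr n n')).
rewrite scaler_sumr -big_split /=.
under eq_bigr => i _ do rewrite scalerA -scalerDl.
have E1 := extE (maxn n n') (fun i => a * (if (i < n)%N then c i else 0) + (if (i < n')%N then c' i else 0)).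
have E2 := extE (maxn n n') (fun i => (if (i < n)%N then c i else 0)).
have E3 := extE (maxn n n') (fun i => (if (i < n')%N then c' i else 0)).
move: E1 E2 E3 => /= E1 E2 E3; rewrite E1 E2 E3.
rewrite scaler_sumr -big_split /=.
by apply eq_bigr => i _; rewrite scalerA -scalerDl.
Qed.

HB.instance Definition _ := GRing.isLinear.Build F M V *:%R ext ext_lin.

Lemma ext_m j : ext (m j) = w j.
Proof.
have E := extE j.+1 (fun i : nat => if i == j then 1 else 0).
have H : \sum_(i < j.+1) (if nat_of_ord i == j then 1 else 0) *: m i = m j.
  rewrite big_ord_recr /= eqxx scale1r big1 ?add0r // => i _.
  by rewrite (ltn_eqF (ltn_ord i)) scale0r.
move: E => /=; rewrite H => ->.
rewrite big_ord_recr /= eqxx scale1r big1 ?add0r // => i _.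
by rewrite (ltn_eqF (ltn_ord i)) scale0r.
Qed.
End Ext.


Lemma ext_basis (F : fieldType) (M V : lmodType F) (m : nat -> M) (Hb : is_basis m)
  (f : {linear M -> V}) (X : {linear M -> M}) (Y : {linear V -> V}) :
  (forall j, f (X (m j)) = Y (f (m j))) -> forall x, f (X x) = Y (f x).
Proof.
move=> H x; have [n [c ->]] := Hb.1 x.
rewrite !linear_sum /=; apply eq_bigr => i _.
by rewrite !linearZ /= H.
Qed.

Lemma zmod_aux_dummy : True. Proof. by []. Qed.
Lemma zmod_aux (F : fieldType) (W : lmodType F) (t k r1 r2 wv : F) (y a a' b b' c c' : W) :
  t != 0 ->
  t *: (a + k *: (r1 *: b - r2 *: c)) = wv *: y ->
  t *: (a' + k *: (r1 *: b' - r2 *: c')) = wv *: y ->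
  a - a' = k *: (r2 *: (c - c') - r1 *: (b - b')).
Proof.
move=> t0 E1; rewrite -E1 => /(scalerI t0) E.
have -> : k *: (r2 *: (c - c') - r1 *: (b - b'))
   = k *: (r1 *: b' - r2 *: c') - k *: (r1 *: b - r2 *: c).
  rewrite -scalerBr; congr (k *: _).
  rewrite !scalerBr; move: (r1 *: b) (r1 *: b') (r2 *: c) (r2 *: c') => B B' C C'.
  by rewrite opprB [in RHS]opprB addrACA [in RHS]addrACA [C + B']addrC.
move: E; move: (k *: _) (k *: (r1 *: b - r2 *: c)) => X' X E.
by apply/eqP; rewrite subr_eq addrAC [X' + a']addrC E addrK.
Qed.

Lemma beta_lin (F : fieldType) (q : F) (V : lmodType F) (A B C : {linear V -> V}) a x y :
  triq_beta q A B C (a *: x + y) = a *: triq_beta q A B C x + triq_beta q A B C y.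
Proof.
pose L : {linear V -> V} := B \+ (q ^+ 2 - q ^- 2)^-1 \*: (q \*: (C \o A) \- q^-1 \*: (A \o C)).
have E : forall z, triq_beta q A B C z = (q + q^-1) *: L z by [].
by rewrite !E linearP scalerDr !scalerA mulrC.
Qed.

Lemma gamma_lin (F : fieldType) (q : F) (V : lmodType F) (A B C : {linear V -> V}) a x y :
  triq_gamma q A B C (a *: x + y) = a *: triq_gamma q A B C x + triq_gamma q A B C y.
Proof.
pose L : {linear V -> V} := C \+ (q ^+ 2 - q ^- 2)^-1 \*: (q \*: (A \o B) \- q^-1 \*: (B \o A)).
have E : forall z, triq_gamma q A B C z = (q + q^-1) *: L z by [].
by rewrite !E linearP scalerDr !scalerA mulrC.
Qed.



Section Core.
Variables (F : fieldType) (q : F) (M V : lmodType F) (AM BM CM : {linear M -> M})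
  (AV BV CV : {linear V -> V}) (f : {linear M -> V}) (wb wg : F).
Hypothesis fA : forall x, f (AM x) = AV (f x).
Hypothesis Mb : forall x, triq_beta q AM BM CM x = wb *: x.
Hypothesis Mg : forall x, triq_gamma q AM BM CM x = wg *: x.
Hypothesis ht : q + q^-1 != 0.

Definition Dd x := f (BM x) - BV (f x).
Definition Ee x := f (CM x) - CV (f x).

Lemma gam_rel x : triq_gamma q AV BV CV (f x) = wg *: f x ->
  Ee x = (q ^+ 2 - q ^- 2)^-1 *: (q^-1 *: Dd (AM x) - q *: AV (Dd x)).
Proof.
move=> HV; have := congr1 f (Mg x).
rewrite /triq_gamma /triq_cC in HV * => H.
rewrite [LHS]linearZ [RHS]linearZ /= linearD [f (_ *: _)]linearZ /= linearB /= [f (_ *: AM _)]linearZ [f (_ *: BM _)]linearZ /= fA in H.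
have := zmod_aux ht H HV.
by rewrite /Ee /Dd fA [AV (_ - _)]linearB.
Qed.

Lemma bet_rel x : triq_beta q AV BV CV (f x) = wb *: f x ->
  Dd x = (q ^+ 2 - q ^- 2)^-1 *: (q^-1 *: AV (Ee x) - q *: Ee (AM x)).
Proof.
move=> HV; have := congr1 f (Mb x).
rewrite /triq_beta /triq_cB in HV * => H.
rewrite [LHS]linearZ [RHS]linearZ /= linearD [f (_ *: _)]linearZ /= linearB /= [f (_ *: CM _)]linearZ [f (_ *: AM _)]linearZ /= fA in H.
have := zmod_aux ht H HV.
by rewrite /Ee /Dd fA [AV (_ - _)]linearB.
Qed.

Lemma Dd_comb x y a : Dd (x + a *: y) = Dd x + a *: Dd y.
Proof.
rewrite /Dd [BM _]linearD [BM (_ *: _)]linearZ /= [f (_ + _)]linearD [f (_ *: _)]linearZ /= [f (_ + _)]linearD [f (_ *: _)]linearZ /= [BV (_ + _)]linearD [BV (_ *: _)]linearZ /= scalerBr.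
by rewrite opprD addrACA.
Qed.

Lemma step x : q != 0 -> q ^+ 2 - q ^- 2 != 0 ->
  triq_beta q AV BV CV (f x) = wb *: f x ->
  triq_gamma q AV BV CV (f x) = wg *: f x ->
  triq_gamma q AV BV CV (f (AM x)) = wg *: f (AM x) ->
  Dd x = 0 -> Dd (AM x) = 0 -> Dd (AM (AM x)) = 0.
Proof.
move=> q0 s0 hb hg hg' D0 D1.
have e1 := gam_rel hg; have e2 := gam_rel hg'; have e3 := bet_rel hb.
rewrite D0 D1 !linear0 ?(scaler0, scalerN, oppr0, addr0, add0r, subr0, sub0r) in e1.
rewrite D1 !linear0 ?(scaler0, scalerN, oppr0, addr0, add0r, subr0, sub0r) in e2.
rewrite D0 e1 e2 !linear0 ?(scaler0, scalerN, oppr0, addr0, add0r, subr0, sub0r) !scalerA in e3.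
move/eqP: e3; rewrite eq_sym ?oppr_eq0 scaler_eq0 => /orP[|/eqP //].
by rewrite !mulf_eq0 !invr_eq0 (negbTE q0) (negbTE s0).
Qed.
End Core.

Lemma qfacts (F : fieldType) (q : F) (d : nat)
  (Hq : d.-primitive_root q) (Hd1 : d != 1%N) (Hd2 : d != 2%N) (Hd4 : d != 4%N) :
  [/\ q != 0, q ^+ 2 - q ^- 2 != 0 & q + q^-1 != 0].
Proof.
have q4 : q ^+ 4 != 1.
  rewrite -(prim_order_dvd Hq); apply/negP => dv.
  have := @dvdn_leq d 4 isT dv.
  move: Hd1 Hd2 Hd4 dv; case: d {Hq} => [|[|[|[|[|d]]]]] //.
have q0 : q != 0.
  apply/eqP => q0; have := prim_expr_order Hq; rewrite q0 expr0n.
  by rewrite eqn0Ngt (prim_order_gt0 Hq) /= => /eqP; rewrite eq_sym oner_eq0.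
split => //.
  apply: contraNneq q4 => /eqP; rewrite subr_eq0 => /eqP h.
  have -> : q ^+ 4 = q ^+ 2 * q ^+ 2 by rewrite -exprD.
  by rewrite {1}h mulVf // expf_neq0.
apply: contraNneq q4 => h.
have : q * (q + q^-1) = 0 by rewrite h mulr0.
rewrite mulrDr mulfV // => /eqP; rewrite addr_eq0 => /eqP h2.
have -> : q ^+ 4 = (q * q) * (q * q) by rewrite !exprS expr0 mulr1 !mulrA.
by rewrite h2 mulrNN mulr1.
Qed.

Lemma alg2 (F : fieldType) (W : lmodType F) (x y : W) (T1 P T0 S0 : F) :
  T1 *: x + P *: y + T0 *: (S0 *: y) - T1 *: (x + T0 *: y) = (T0 * (S0 - T1) + P) *: y.
Proof.
rewrite scalerDr opprD !scalerA addrACA [T1 *: x + _ - _]addrAC subrr add0r -scalerBl -scalerDl.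
by congr (_ *: _); ring.
Qed.

Lemma beta_A (F : fieldType) (q : F) (V : lmodType F) (A B C : {linear V -> V}) :
  is_triq_module q A B C -> forall y, triq_beta q A B C (A y) = A (triq_beta q A B C y).
Proof.
move=> [_ [[H _] _]] y; by rewrite /triq_beta H linearZ.
Qed.

Lemma gamma_A (F : fieldType) (q : F) (V : lmodType F) (A B C : {linear V -> V}) :
  is_triq_module q A B C -> forall y, triq_gamma q A B C (A y) = A (triq_gamma q A B C y).
Proof.
move=> [_ [_ [H _]]] y; by rewrite /triq_gamma H linearZ.
Qed.

Lemma beta_f (F : fieldType) (q : F) (M V : lmodType F) (AM BM CM : {linear M -> M})
  (AV BV CV : {linear V -> V}) (f : {linear M -> V}) :
  (forall x, f (AM x) = AV (f x)) -> (forall x, f (BM x) = BV (f x)) ->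
  (forall x, f (CM x) = CV (f x)) ->
  forall x, triq_beta q AV BV CV (f x) = f (triq_beta q AM BM CM x).
Proof.
move=> fA fB fC x; rewrite /triq_beta /triq_cB.
rewrite [RHS]linearZ /= [f (_ + _)]linearD [f (_ *: _)]linearZ /= [f (_ - _)]linearB /=.
by rewrite [f (_ *: CM _)]linearZ [f (_ *: AM _)]linearZ /= ?(fA, fB, fC).
Qed.

Lemma gamma_f (F : fieldType) (q : F) (M V : lmodType F) (AM BM CM : {linear M -> M})
  (AV BV CV : {linear V -> V}) (f : {linear M -> V}) :
  (forall x, f (AM x) = AV (f x)) -> (forall x, f (BM x) = BV (f x)) ->
  (forall x, f (CM x) = CV (f x)) ->
  forall x, triq_gamma q AV BV CV (f x) = f (triq_gamma q AM BM CM x).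
Proof.
move=> fA fB fC x; rewrite /triq_gamma /triq_cC.
rewrite [RHS]linearZ /= [f (_ + _)]linearD [f (_ *: _)]linearZ /= [f (_ - _)]linearB /=.
by rewrite [f (_ *: AM _)]linearZ [f (_ *: BM _)]linearZ /= ?(fA, fB, fC).
Qed.

Lemma varphi0 (F : fieldType) (q a b c lam : F) : varphi q a b c lam 0 = 0.
Proof. by rewrite /varphi oppr0 expr0z subrr !mulr0 !mul0r. Qed.

Lemma alg3 (F : fieldType) (W : lmodType F) (X y : W) (T1 T0 P S0 : F) :
  T1 *: X + T1 *: - (T0 *: y) + P *: y
    - (T1 *: X + (T0 * (S0 - T1) + P) *: y - T0 *: (S0 *: y)) = 0.
Proof.
rewrite scalerN !scalerA; apply/eqP; rewrite subr_eq0 -!addrA; apply/eqP.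
congr (_ + _); rewrite -!scaleNr -!scalerDl; congr (_ *: _); ring.
Qed.

Fixpoint wseq (F : fieldType) (V : lmodType F) (A : V -> V) (th : nat -> F) (v : V) (j : nat) : V :=
  match j with 0 => v | j'.+1 => A (wseq A th v j') - th j' *: wseq A th v j' end.


Unset Implicit Arguments.
Set Strict Implicit.

Theorem proposition3p1 (F : closedFieldType) (q : F) (d : nat)
  (Hq : d.-primitive_root q) (Hd1 : d != 1%N) (Hd2 : d != 2%N) (Hd4 : d != 4%N)
  (a b c lam : F) (Ha : a != 0) (Hb : b != 0) (Hc : c != 0) (Hlam : lam != 0)
  (M : lmodType F) (AM BM CM : {linear M -> M}) (m : nat -> M)
  (HM : is_verma q a b c lam AM BM CM m)
  (V : lmodType F) (AV BV CV : {linear V -> V})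
  (HV : is_triq_module q AV BV CV) (v : V) :
  (exists f : {linear M -> V},
     [/\ forall x, f (AM x) = AV (f x),
         forall x, f (BM x) = BV (f x),
         forall x, f (CM x) = CV (f x) &
         f (m 0%N) = v])
  <->
  [/\ BV v = thetas q b lam 0 *: v,
      (BV \o AV) v - thetas q b lam 1 *: AV v
        = (theta q a lam 0 * (thetas q b lam 0 - thetas q b lam 1)
           + varphi q a b c lam 1) *: v,
      triq_beta q AV BV CV v = omega_beta q a b c lam *: v &
      triq_gamma q AV BV CV v = omega_gamma q a b c lam *: v].
Proof.
have [q0 s0 t0] := qfacts Hq Hd1 Hd2 Hd4.
case: HM => HMmod [Hbas [HA [HB [Hal [Hbe Hga]]]]].
have AMm : forall j, AM (m j) = m j.+1 + theta q a lam j *: m j.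
  by move=> j; rewrite -HA subrK.
have BMm : forall j, BM (m j) = thetas q b lam j *: m j + varphi q a b c lam j *: m j.-1.
  by move=> j; rewrite -HB addrC subrK.
have B0 : BM (m 0) = thetas q b lam 0 *: m 0 by rewrite BMm varphi0 scale0r addr0.
split.
  case=> f [fA fB fC f0]; split.
  - by rewrite -f0 -fB B0 linearZ.
  - rewrite /= -f0 -fA -fB -linearZ -linearB AMm [BM _]linearD [BM (_ *: _)]linearZ /=.
    rewrite B0 BMm /= alg2; by rewrite linearZ.
  - by rewrite -f0 (beta_f q fA fB fC) Hbe linearZ.
  - by rewrite -f0 (gamma_f q fA fB fC) Hga linearZ.
case=> h1 h2 h3 h4.
pose w := wseq AV (theta q a lam) v.
have wS : forall j, w j.+1 = AV (w j) - theta q a lam j *: w j by [].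
pose f : {linear M -> V} := ext w Hbas.
have fm : forall j, f (m j) = w j := ext_m w Hbas.
have fA : forall x, f (AM x) = AV (f x).
  apply: (ext_basis Hbas) => j; rewrite AMm linearD linearZ /= !fm wS subrK.
  by [].
have Sw : forall j, triq_beta q AV BV CV (w j) = omega_beta q a b c lam *: w j /\
                    triq_gamma q AV BV CV (w j) = omega_gamma q a b c lam *: w j.
  elim=> [|j [IHb IHg]]; first by split.
  rewrite wS -scaleNr addrC; split.
    by rewrite beta_lin beta_A // IHb [AV (_ *: _)]linearZ /= scalerDr !scalerA mulrC.
  by rewrite gamma_lin gamma_A // IHg [AV (_ *: _)]linearZ /= scalerDr !scalerA mulrC.
have Dm : forall j, Dd BM BV f (m j) = 0 /\ Dd BM BV f (m j.+1) = 0.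
  elim=> [|j [D0 D1]].
    split.
      by rewrite /Dd B0 linearZ fm h1 subrr.
    rewrite /Dd BMm /= linearD !linearZ /= !fm /= wS linearB linearZ /=.
    have h2' : BV (AV v) = thetas q b lam 1 *: AV v + (theta q a lam 0 * (thetas q b lam 0 - thetas q b lam 1)
           + varphi q a b c lam 1) *: v by rewrite -h2 addrC subrK.
    rewrite [BV _]linearB [BV (_ *: _)]linearZ /= h2' h1.
    exact: alg3.
  split => //.
  have DA : Dd BM BV f (AM (m j)) = 0 by rewrite AMm Dd_comb D0 D1 scaler0 addr0.
  have hb : triq_beta q AV BV CV (f (m j)) = omega_beta q a b c lam *: f (m j).
    by rewrite fm; exact: (Sw j).1.
  have hg : triq_gamma q AV BV CV (f (m j)) = omega_gamma q a b c lam *: f (m j).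
    by rewrite fm; exact: (Sw j).2.
  have hg' : triq_gamma q AV BV CV (f (AM (m j))) = omega_gamma q a b c lam *: f (AM (m j)).
    by rewrite fA fm gamma_A // (Sw j).2 linearZ.
  have DAA := step fA Hbe Hga t0 q0 s0 hb hg hg' D0 DA.
  rewrite AMm [AM (_ + _)]linearD [AM (_ *: _)]linearZ /= AMm !Dd_comb D1 DA !scaler0 !addr0 in DAA.
  exact: DAA.
have Dall : forall x, f (BM x) = BV (f x).
  apply: (ext_basis Hbas) => j; apply/eqP; rewrite -subr_eq0; apply/eqP; exact: (Dm j).1.
have Call : forall x, f (CM x) = CV (f x).
  apply: (ext_basis Hbas) => j; apply/eqP; rewrite -subr_eq0; apply/eqP.
  have hg : triq_gamma q AV BV CV (f (m j)) = omega_gamma q a b c lam *: f (m j).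
    by rewrite fm; exact: (Sw j).2.
  have := gam_rel fA Hga t0 hg.
  rewrite /Dd /Ee !Dall !subrr !linear0 ?(scaler0, scalerN, oppr0, addr0, add0r, subr0, sub0r).
  by [].
exists f; split => //.
Qed.
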